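(* Let $T$ be a subcubic tree of order $n$ and dissociation number $\psi$. If $\psi=\frac{4n+2}{5}$, then $T$ has exactly one maximum dissociation set, i.e., $\Phi(T)=1$.
   Context: All graphs are finite, simple and undirected. A subcubic tree is a tree of maximum degree at most $3$. A dissociation set in a graph $G$ is a vertex subset $F$ such that the induced subgraph $G[F]$ has maximum degree at most $1$; a maximum dissociation set is one of maximum cardinality, and the dissociation number $\psi(G)$ is that cardinality. $\Phi(G)$ denotes the number of maximum dissociation sets of $G$. *)

(* Defs.v *)
From mathcomp Require Import all_boot.
Set Implicit Arguments. Unset Strict Implicit. Unset Printing Implicit Defensive.

Definition simple_graph (V : finType) (e : rel V) : Prop :=
  symmetric e /\ irreflexive e.

Definition nbhd (V : finType) (e : rel V) (x : V) : {set V} := [set y | e x y].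

Definition degree (V : finType) (e : rel V) (x : V) : nat := #|nbhd e x|.

Definition edge_set (V : finType) (e : rel V) : {set {set V}} :=
  [set [set x; y] | x in V, y in V & e x y].

Definition connected_graph (V : finType) (e : rel V) : Prop :=
  forall x y : V, connect e x y.

Definition is_tree (V : finType) (e : rel V) : Prop :=
  [/\ simple_graph e, 0 < #|V|, connected_graph e & #|edge_set e| = #|V| - 1].

Definition subcubic (V : finType) (e : rel V) : Prop :=
  forall x : V, degree e x <= 3.

Definition dissociation_set (V : finType) (e : rel V) (F : {set V}) : bool :=
  [forall x in F, #|nbhd e x :&: F| <= 1].

Definition dissociation_number (V : finType) (e : rel V) : nat :=
  \max_(F : {set V} | dissociation_set e F) #|F|.

Definition max_dissociation_set (V : finType) (e : rel V) (F : {set V}) : bool :=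
  dissociation_set e F && (#|F| == dissociation_number e).

Definition num_max_dissociation_sets (V : finType) (e : rel V) : nat :=
  #|[set F : {set V} | max_dissociation_set e F]|.

(* Main.v *)
Require Import Defs.
From mathcomp Require Import all_boot zify.
Set Implicit Arguments. Unset Strict Implicit. Unset Printing Implicit Defensive.

Section Aux.
Variables (V : finType) (e : rel V).
Hypothesis esym : symmetric e.
Hypothesis eirr : irreflexive e.

Definition cnt (A B : {set V}) : nat :=
  \sum_(p : V * V) ((p.1 \in A) && (p.2 \in B) && e p.1 p.2 : nat).

Lemma card_nbI x (B : {set V}) : #|nbhd e x :&: B| = \sum_y ((y \in B) && e x y : nat).
Proof.
rewrite -sum1_card big_mkcond /=; apply: eq_bigr => y _.
by rewrite /nbhd in_setI in_set andbC; case: (_ && _).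
Qed.

Lemma cntE A B : cnt A B = \sum_(x in A) #|nbhd e x :&: B|.
Proof.
rewrite /cnt -(pair_bigA _ (fun x y => ((x \in A) && (y \in B) && e x y) : nat)) /=.
rewrite [RHS]big_mkcond /=; apply: eq_bigr => x _.
rewrite card_nbI; case: (x \in A) => //=.
by rewrite big1.
Qed.

Lemma cnt_sym A B : cnt A B = cnt B A.
Proof.
rewrite /cnt (reindex_inj (h := fun p : V * V => (p.2, p.1))); last first.
  by move=> [a b] [c d] /= [-> ->].
apply: eq_bigr => -[a b] _ /=. rewrite [e b a]esym. congr (_ && _). exact: andbC.
Qed.

Lemma cnt_splitl A B C : cnt A B = cnt (A :&: C) B + cnt (A :\: C) B.
Proof.
rewrite /cnt -big_split /=; apply: eq_bigr => p _.
rewrite in_setI in_setD; case: (p.1 \in A); case: (p.1 \in C) => /=; by rewrite ?addn0.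
Qed.

Lemma cnt_splitr A B C : cnt A B = cnt A (B :&: C) + cnt A (B :\: C).
Proof. by rewrite cnt_sym (cnt_splitl _ _ C) !(cnt_sym A). Qed.

Lemma sum_lt2 (I : finType) (f g : I -> nat) i j : i != j ->
  (forall k, f k <= g k) -> f i < g i -> f j < g j ->
  \sum_k f k + 2 <= \sum_k g k.
Proof.
move=> nij fg hi hj.
have nji : j != i by rewrite eq_sym.
rewrite (bigD1 i (F := f)) // (bigD1 j (F := f)) /= ?nji //.
rewrite (bigD1 i (F := g)) // (bigD1 j (F := g)) /= ?nji //.
have : \sum_(k | (k != i) && (k != j)) f k <= \sum_(k | (k != i) && (k != j)) g k.
  by apply: leq_sum => k _.
lia.
Qed.

Lemma handshake : cnt setT setT = 2 * #|edge_set e|.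
Proof.
rewrite /cnt.
transitivity (\sum_(p : V * V | e p.1 p.2) 1).
  rewrite [RHS]big_mkcond /=; apply: eq_bigr => p _; rewrite !in_setT /=; by case: (e _ _).
rewrite (partition_big (fun p : V * V => [set p.1; p.2]) (mem (edge_set e))) /=; last first.
  move=> [a b] /= hab; apply/imset2P; apply: (Imset2spec (x1 := a) (x2 := b)) => //.
  by rewrite inE.
rewrite mulnC -sum_nat_const; apply: eq_bigr => E /imset2P [x y _].
rewrite inE /= => exy ->.
rewrite sum1_card.
have H : (fun i : V * V => e i.1 i.2 && ([set i.1; i.2] == [set x; y]))
   =i [set (x, y); (y, x)].
  move=> [a b]; rewrite unfold_in !inE /= !xpair_eqE.
  apply/idP/idP.
  - move=> /andP [eab /eqP E2].
    have ha : a \in [set x; y] by rewrite -E2 !inE eqxx.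
    have hb : b \in [set x; y] by rewrite -E2 !inE eqxx orbT.
    move: ha hb eab; rewrite !inE => /orP [] /eqP -> /orP [] /eqP -> eab;
      rewrite ?eqxx ?andbT ?orbT //; by rewrite eirr in eab.
  - move=> /orP [] /andP [] /eqP -> /eqP ->; rewrite ?exy ?eqxx //=.
    by rewrite esym exy setUC eqxx.
rewrite (eq_card H) cards2 xpair_eqE negb_and.
case: eqP => [exx|]; last by [].
by rewrite exx eirr in exy.
Qed.


Lemma sum_eq_bound (A : {set V}) (f : V -> nat) k :
  (forall x, x \in A -> f x <= k) -> \sum_(x in A) f x = #|A| * k ->
  forall x, x \in A -> f x = k.
Proof.
move=> hb hs x xA.
have h1 : \sum_(x in A) k = \sum_(x in A) f x + \sum_(x in A) (k - f x).
  rewrite -big_split /=; apply: eq_bigr => y yA; by rewrite subnKC // hb.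
rewrite sum_nat_const hs in h1.
have h2 : \sum_(x in A) (k - f x) == 0 by apply/eqP; lia.
move: h2; rewrite sum_nat_eq0 => /forall_inP /(_ x xA) /eqP.
have := hb x xA; lia.
Qed.

Lemma key (F : {set V}) : #|edge_set e| = #|V| - 1 -> 0 < #|V| ->
  (forall x, degree e x <= 3) -> dissociation_set e F ->
  #|V| = 5 * #|~: F| + 2 ->
  (forall x, x \in F -> #|nbhd e x :&: F| = 1) /\
  (forall x, x \notin F -> #|nbhd e x| = 3 /\ nbhd e x \subset F).
Proof.
move=> hE hn hdeg /forall_inP hdis hV.
have hs := handshake; rewrite hE in hs.
have sp := cnt_splitl setT setT F.
rewrite setTI setTD (cnt_splitr F setT F) (cnt_splitr (~: F) setT F) !setTI !setTD in sp.
have sym := cnt_sym F (~: F).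
have hST := cnt_splitr (~: F) setT F; rewrite setTI setTD in hST.
have bFF : cnt F F <= #|F|.
  rewrite cntE -sum1_card; apply: leq_sum => x xF; exact: hdis.
have bST : cnt (~: F) setT <= #|~: F| * 3.
  rewrite cntE -sum_nat_const; apply: leq_sum => x _; rewrite setIT; exact: hdeg.
have hC := cardsC F.
have eFF : cnt F F = #|F| * 1 by lia.
have eST : cnt (~: F) setT = #|~: F| * 3 by lia.
have eSS : cnt (~: F) (~: F) = 0 by lia.
split.
  apply: (sum_eq_bound (f := fun y => #|nbhd e y :&: F|)) => [y yF|]; first exact: hdis.
  by rewrite -cntE.
move=> x xnF; have xS : x \in ~: F by rewrite inE.
split.
  rewrite -(setIT (nbhd e x)); move: x xS {xnF}.
  apply: (sum_eq_bound (f := fun y => #|nbhd e y :&: setT|)) => [y _|].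
    by rewrite setIT; apply: hdeg.
  by rewrite -cntE.
move: eSS; rewrite cntE => /eqP; rewrite sum_nat_eq0 => /forall_inP /(_ x xS) /eqP.
move/cards0_eq; rewrite -setDE => /eqP; by rewrite setD_eq0.
Qed.

Lemma grow (hconn : connected_graph e) k : forall U : {set V}, #|~: U| = k ->
  U != set0 -> 2 * #|U| <= cnt U U -> 2 * #|V| <= cnt setT setT.
Proof.
elim: k => [|k IH] U hk hU hc.
  have := cards0_eq hk => /(congr1 (fun A => ~: A)); rewrite setCK setC0 => HU.
  by rewrite HU cardsT in hc.
have [x xU] := set0Pn _ hU.
have : ~: U != set0 by rewrite -card_gt0 hk.
case/set0Pn => y; rewrite inE => yU.
have [/existsP [a /existsP [b /andP [/andP [aU bU] eab]]] | none] :=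
  boolP [exists a, exists b, (a \in U) && (b \notin U) && e a b].
  apply: (IH (b |: U)).
  - have := cardsC (b |: U); have := cardsC U; rewrite cardsU1 bU; lia.
  - apply/set0Pn; exists b; by rewrite setU11.
  - have : cnt U U + 2 <= cnt (b |: U) (b |: U).
      rewrite /cnt; apply: (sum_lt2 (i := (a, b)) (j := (b, a))).
      + rewrite xpair_eqE; apply/nandP; left; apply/eqP => ab.
        by rewrite -ab aU in bU.
      + move=> [p q] /=; rewrite !in_setU1.
        by case: (p \in U); case: (q \in U); case: (p == b); case: (q == b); case: (e p q).
      + by rewrite /= !in_setU1 eqxx aU (negbTE bU) eab !orbT.
      + by rewrite /= !in_setU1 eqxx aU (negbTE bU) esym eab !orbT.
    rewrite cardsU1 bU; lia.
exfalso.
have cl : closed e U.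
  move=> a b eab.
  case aU: (a \in U); case bU: (b \in U) => //; exfalso; apply: (negP none).
    by apply/existsP; exists a; apply/existsP; exists b; rewrite aU bU eab.
  by apply/existsP; exists b; apply/existsP; exists a; rewrite aU bU esym eab.
have := closed_connect cl (hconn x y).
by rewrite xU (negbTE yU).
Qed.

Lemma cross (F1 F2 : {set V}) x :
  (forall x, x \notin F1 -> #|nbhd e x| = 3 /\ nbhd e x \subset F1) ->
  (forall x, x \in F2 -> #|nbhd e x :&: F2| = 1) ->
  x \notin F1 -> x \in F2 -> 2 <= #|nbhd e x :&: (~: F2 :&: F1)|.
Proof.
move=> H1 H2 xn1 x2.
have [h3 hsub] := H1 x xn1.
have := cardsID F2 (nbhd e x); rewrite h3 H2 // => h.
have : #|nbhd e x :\: F2| <= #|nbhd e x :&: (~: F2 :&: F1)|.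
  apply: subset_leq_card; apply/subsetP => z.
  rewrite in_setD !in_setI in_setC => /andP [zn2 zN].
  by rewrite zN zn2 (subsetP hsub z zN).
lia.
Qed.

Lemma uniq_max (F1 F2 : {set V}) : connected_graph e ->
  #|edge_set e| = #|V| - 1 -> 0 < #|V| ->
  (forall x, x \in F1 -> #|nbhd e x :&: F1| = 1) ->
  (forall x, x \notin F1 -> #|nbhd e x| = 3 /\ nbhd e x \subset F1) ->
  (forall x, x \in F2 -> #|nbhd e x :&: F2| = 1) ->
  (forall x, x \notin F2 -> #|nbhd e x| = 3 /\ nbhd e x \subset F2) ->
  F1 = F2.
Proof.
move=> hconn hE hn H1 H1' H2 H2'.
set W := (~: F1 :&: F2) :|: (~: F2 :&: F1).
case: (eqVneq W set0) => [W0|Wn].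
  apply/setP => z.
  have : z \notin W by rewrite W0 inE.
  rewrite !inE; by case: (z \in F1); case: (z \in F2).
exfalso.
have hc : 2 * #|W| <= cnt W W.
  rewrite cntE mulnC -sum_nat_const; apply: leq_sum => w.
  rewrite !inE => /orP [/andP [w1 w2] | /andP [w2 w1]].
    apply: leq_trans (cross H1' H2 w1 w2) _.
    apply: subset_leq_card; apply: setIS; exact: subsetUr.
  apply: leq_trans (cross H2' H1 w2 w1) _.
  apply: subset_leq_card; apply: setIS; exact: subsetUl.
have := grow hconn (erefl _) Wn hc.
rewrite handshake hE; lia.
Qed.

End Aux.

Theorem corollary3p3 (V : finType) (e : rel V) :
  is_tree e -> subcubic e ->
  5 * dissociation_number e = 4 * #|V| + 2 ->
  num_max_dissociation_sets e = 1.
Proof.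
move=> [[esym eirr] hn hconn hE] hsub hpsi.
have hne : 0 < #|dissociation_set e|.
  apply/card_gt0P; exists set0; rewrite unfold_in /dissociation_set.
  by apply/forall_inP => x; rewrite inE.
have [F0 F0d F0max] := eq_bigmax_cond (fun F : {set V} => #|F|) hne.
have hpsi0 : dissociation_number e = #|F0| by rewrite -F0max.
have F0d' : dissociation_set e F0 by move: F0d; rewrite unfold_in.
have facts : forall F, max_dissociation_set e F ->
  (forall x, x \in F -> #|nbhd e x :&: F| = 1) /\
  (forall x, x \notin F -> #|nbhd e x| = 3 /\ nbhd e x \subset F).
  move=> F /andP [Fd /eqP FE].
  apply: key => //.
  have := cardsC F; lia.
have F0m : max_dissociation_set e F0 by rewrite /max_dissociation_set F0d' hpsi0 eqxx.
rewrite /num_max_dissociation_sets.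
have -> : [set F | max_dissociation_set e F] = [set F0].
  apply/setP => F; rewrite !inE; apply/idP/eqP => [hF | ->] //.
  have [a b] := facts F hF; have [c d] := facts F0 F0m.
  exact: (uniq_max esym eirr hconn hE hn a b c d).
by rewrite cards1.
Qed.
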